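(* Let $(\mu,\sigma)\in\mathbb{K}[[\mathtt{x}]]\times\mathfrak{M}$ be topologically nilpotent, i.e. $\lim_{n\to\infty}(\mu,\sigma)^{\rtimes n}=(0,0)$. Then for every sequence of scalars $(\alpha_n)_{n\in\mathbb{N}}$ in $\mathbb{K}$, the family $(\alpha_n(\mu,\sigma)^{\rtimes n})_{n\in\mathbb{N}}$ is summable in $\mathbb{K}[[\mathtt{x}]]\times\mathfrak{M}$.
   Context: $\mathbb{K}$ is a field of characteristic zero (discrete topology); $\mathbb{K}[[\mathtt{x}]]$ has the $(\mathtt{x})$-adic topology; $\mathfrak{M}:=\mathtt{x}\mathbb{K}[[\mathtt{x}]]$ the subspace topology; $\mathbb{K}[[\mathtt{x}]]\times\mathfrak{M}$ the product topology and componentwise vector space structure. For $f=\sum f_n\mathtt{x}^n$ and $\sigma\in\mathfrak{M}$, $f\circ\sigma:=\sum f_n\sigma^n$. Product: $(\mu_1,\sigma_1)\rtimes(\mu_2,\sigma_2):=((\mu_1\circ\sigma_2)\mu_2,\sigma_1\circ\sigma_2)$; powers $(\mu,\sigma)^{\rtimes0}:=(1,\mathtt{x})$, $(\mu,\sigma)^{\rtimes n}$ the $n$-fold product. A family $(u_n)$ in a Hausdorff commutative topological group is summable if the net of finite partial sums over finite subsets of $\mathbb{N}$ (ordered by inclusion) converges. *)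

(* Defs.v *)
From mathcomp Require Import all_boot all_order all_algebra.
Set Implicit Arguments. Unset Strict Implicit. Unset Printing Implicit Defensive.
Import Order.TTheory GRing.Theory Num.Theory.
Local Open Scope ring_scope.

Definition fps (K : fieldType) := nat -> K.

Section FPS.
Variable K : fieldType.

Definition fps_zero : fps K := fun _ => 0.
Definition fps_one : fps K := fun k => (k == 0%N)%:R.
Definition fps_X : fps K := fun k => (k == 1%N)%:R.
Definition fps_add (f g : fps K) : fps K := fun k => f k + g k.
Definition fps_scale (a : K) (f : fps K) : fps K := fun k => a * f k.
Definition fps_mul (f g : fps K) : fps K :=
  fun k => \sum_(i < k.+1) f i * g (k - i)%N.
Definition fps_pow (f : fps K) (n : nat) : fps K := iter n (fps_mul f) fps_one.

(* membership in the maximal ideal M = x K[[x]] *)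
Definition inM (s : fps K) : Prop := s 0%N = 0.

(* composition f o s := sum_n f_n s^n; for s in M the series s^n has
   valuation >= n, so the coefficient of x^k only involves n <= k. *)
Definition fps_comp (f s : fps K) : fps K :=
  fun k => \sum_(n < k.+1) f n * fps_pow s n k.

Definition sdprod (p q : fps K * fps K) : fps K * fps K :=
  (fps_mul (fps_comp p.1 q.2) q.1, fps_comp p.2 q.2).

Fixpoint sdpow (p : fps K * fps K) (n : nat) : fps K * fps K :=
  match n with
  | 0%N => (fps_one, fps_X)
  | n'.+1 => sdprod (sdpow p n') p
  end.

Definition pz_add (p q : fps K * fps K) := (fps_add p.1 q.1, fps_add p.2 q.2).
Definition pz_scale (a : K) (p : fps K * fps K) :=
  (fps_scale a p.1, fps_scale a p.2).
Definition pz_zero : fps K * fps K := (fps_zero, fps_zero).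

(* agreement of coefficients below N: the basic (x)-adic neighbourhoods
   (x^N K[[x]]), product topology on pairs *)
Definition pair_close (N : nat) (p q : fps K * fps K) : Prop :=
  forall k, (k < N)%N -> p.1 k = q.1 k /\ p.2 k = q.2 k.

Definition pair_seq_lim (u : nat -> fps K * fps K) (l : fps K * fps K) : Prop :=
  forall N, exists n0, forall n, (n0 <= n)%N -> pair_close N (u n) l.

Definition pair_fsum (u : nat -> fps K * fps K) (F : seq nat) :=
  foldr (fun i acc => pz_add (u i) acc) pz_zero F.

(* summability: the net of finite partial sums, indexed by finite subsets of
   nat ordered by inclusion, converges to a limit in K[[x]] x M *)
Definition pair_summable (u : nat -> fps K * fps K) : Prop :=
  exists S : fps K * fps K, inM S.2 /\
    forall N, exists F0 : seq nat, uniq F0 /\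
      forall F : seq nat, uniq F -> {subset F0 <= F} ->
        pair_close N (pair_fsum u F) S.

End FPS.

(* Main.v *)
Require Import Defs.
From mathcomp Require Import all_boot all_order all_algebra.
From Stdlib Require Import ClassicalEpsilon.
Set Implicit Arguments. Unset Strict Implicit. Unset Printing Implicit Defensive.
Import Order.TTheory GRing.Theory Num.Theory.
Local Open Scope ring_scope.

Lemma fsum_coef (K : fieldType) (u : nat -> fps K * fps K) F k :
  (pair_fsum u F).1 k = \sum_(i <- F) (u i).1 k /\
  (pair_fsum u F).2 k = \sum_(i <- F) (u i).2 k.
Proof.
elim: F => [|i F [IH1 IH2]]; first by rewrite !big_nil.
by rewrite !big_cons /= /fps_add -IH1 -IH2.
Qed.

Lemma sum_trunc (K : fieldType) (f : nat -> K) (B : nat) (F : seq nat) :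
  (forall i, (B <= i)%N -> f i = 0) -> uniq F -> {subset iota 0 B <= F} ->
  \sum_(i <- F) f i = \sum_(i < B) f i.
Proof.
move=> hf uF sub.
rewrite (bigID (fun i => (i < B)%N)) /= [X in _ + X]big1; last first.
  by move=> i; rewrite -leqNgt; apply: hf.
rewrite addr0 -big_filter -(big_mkord xpredT) /=.
apply: perm_big; apply: uniq_perm; first exact: filter_uniq.
  exact: iota_uniq.
move=> i; rewrite mem_filter mem_iota /= add0n.
case hi: (i < B)%N; rewrite ?andbF //= ?andbT.
  by rewrite subn0 hi (sub i) // mem_iota add0n hi.
by rewrite subn0 hi.
Qed.

Lemma sdpow2_0 (K : fieldType) (p : fps K * fps K) n : (sdpow p n).2 0%N = 0.
Proof.
elim: n => [|n IH] /=; first by rewrite /fps_X.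
by rewrite /fps_comp big_ord1 IH mul0r.
Qed.

Theorem mainTheorem6 (K : fieldType) (charK0 : [pchar K] =i pred0)
  (mu sigma : fps K) (hsigma : inM sigma)
  (hnil : pair_seq_lim (fun n => sdpow (mu, sigma) n) (pz_zero K))
  (alpha : nat -> K) :
  pair_summable (fun n => pz_scale (alpha n) (sdpow (mu, sigma) n)).
Proof.
set u := fun n => pz_scale (alpha n) (sdpow (mu, sigma) n).
have [m hm] : { m : nat -> nat | forall N n, (m N <= n)%N ->
    pair_close N (sdpow (mu, sigma) n) (pz_zero K) }.
  apply: (constructive_indefinite_description
     (fun m : nat -> nat => forall N n, (m N <= n)%N ->
        pair_close N (sdpow (mu, sigma) n) (pz_zero K))).
  have := fun N => constructive_indefinite_description _ (hnil N).
  move=> h; exists (fun N => sval (h N)) => N; exact: (svalP (h N)).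
have z1 : forall k n, (m k.+1 <= n)%N -> (u n).1 k = 0.
  move=> k n hn; rewrite /u /= /fps_scale; have [-> _] := hm _ _ hn k (ltnSn k).
  by rewrite /pz_zero /fps_zero /= mulr0.
have z2 : forall k n, (m k.+1 <= n)%N -> (u n).2 k = 0.
  move=> k n hn; rewrite /u /= /fps_scale; have [_ ->] := hm _ _ hn k (ltnSn k).
  by rewrite /pz_zero /fps_zero /= mulr0.
exists ((fun k => \sum_(n < m k.+1) (u n).1 k),
        (fun k => \sum_(n < m k.+1) (u n).2 k)); split.
  rewrite /inM /=; apply: big1 => i _.
  by rewrite /u /= /fps_scale sdpow2_0 mulr0.
move=> N; exists (iota 0 (\max_(k < N) m k.+1)); split; first exact: iota_uniq.
move=> F uF sub k hk; have [-> ->] := fsum_coef u F k; simpl.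
have hle : (m k.+1 <= \max_(k0 < N) m k0.+1)%N.
  exact: (leq_bigmax (F := fun k0 : 'I_N => m k0.+1) (Ordinal hk)).
have sub' : {subset iota 0 (m k.+1) <= F}.
  move=> i; rewrite mem_iota add0n => hi; apply: sub.
  by rewrite mem_iota add0n (leq_trans hi hle).
split; apply: sum_trunc => //; [exact: z1 | exact: z2].
Qed.
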